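(* Let $d$ be a compatible metric on the Cantor space $\mathbf{C}$ and let $h:\mathbf{C}\to\mathbf{C}$ be an isometry of $(\mathbf{C},d)$. Then for every clopen set $U\subseteq\mathbf{C}$ there exists a positive integer $l$ such that $h^l(U)=U$.
   Context: $\mathbf{C}$ denotes the Cantor space. *)

(* Defs.v *)
From HB Require Import structures.
From mathcomp Require Import all_boot all_order all_algebra.
From mathcomp Require Import all_classical all_reals all_analysis.
Set Implicit Arguments. Unset Strict Implicit. Unset Printing Implicit Defensive.
Import Order.TTheory GRing.Theory Num.Theory.
Local Open Scope classical_set_scope.
Local Open Scope ring_scope.

Definition is_metric (R : realType) (T : Type) (d : T -> T -> R) : Prop :=
  [/\ (forall x y, 0 <= d x y),
      (forall x y, d x y = 0 <-> x = y),
      (forall x y, d x y = d y x) &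
      (forall x y z, d x z <= d x y + d y z)].

(* d is a metric on the topological space T inducing its topology:
   a set is open iff it contains a d-ball around each of its points. *)
Definition compatible_metric (R : realType) (T : topologicalType)
    (d : T -> T -> R) : Prop :=
  is_metric d /\
  forall A : set T,
    open A <-> (forall x, A x -> exists2 e : R, 0 < e & [set y | d x y < e] `<=` A).

Definition isometry_of (R : realType) (T : Type) (d : T -> T -> R) (h : T -> T) : Prop :=
  forall x y, d (h x) (h y) = d x y.

(* Main.v *)
Require Import Defs.
From HB Require Import structures.
From mathcomp Require Import all_boot all_order all_algebra.
From mathcomp Require Import all_classical all_reals all_analysis.
From mathcomp Require Import lra finmap.
Import Order.TTheory GRing.Theory Num.Theory.
Set Implicit Arguments.
Local Open Scope classical_set_scope.
Local Open Scope ring_scope.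

Lemma ball_open (R : realType) (d : cantor_space -> cantor_space -> R) :
  compatible_metric d -> forall x e, open [set y | d x y < e].
Proof.
move=> [[d0 dE dC dT] Ho] x e; apply/Ho => y /= dxy.
exists (e - d x y); first by rewrite subr_gt0.
move=> z /= dyz; have := dT x y z; lra.
Qed.

Lemma minpos (R : realType) (T : eqType) (s : seq T) (g : T -> R) :
  (forall x, 0 < g x) -> exists2 e, 0 < e & forall x, x \in s -> e <= g x.
Proof.
move=> gp; elim: s => [|a s [e e0 He]]; first by exists 1.
exists (Num.min e (g a)); first by rewrite lt_min e0 gp.
move=> x; rewrite inE => /orP [/eqP ->|xs]; first by rewrite ge_min lexx orbT.
by rewrite ge_min He.
Qed.

Lemma net (R : realType) (d : cantor_space -> cantor_space -> R) :
  compatible_metric d -> forall r, 0 < r ->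
  exists D' : {fset cantor_space}, forall x, exists2 p, p \in D' & d p x < r.
Proof.
move=> Hd r r0; have := cantor_space_compact; rewrite compact_cover.
move=> /(_ cantor_space setT (fun p => [set y | d p y < r])).
case.
- by move=> i _; apply: ball_open.
- move=> x _; exists x => //=; case: Hd => [[_ dE _ _] _].
  by have [_ ->] := dE x x.
move=> D' _ cov; exists D' => x; have [p /= pD pr] := cov x I.
by exists p.
Qed.

Lemma leb (R : realType) (d : cantor_space -> cantor_space -> R) (U : set cantor_space) :
  compatible_metric d -> clopen U ->
  exists2 eps, 0 < eps & forall x y, d x y < eps -> (U x <-> U y).
Proof.
move=> Hd [Uo Uc].
have Hd' := Hd; case: Hd' => [[d0 dE dC dT] Ho].
have loc : forall x, exists e, 0 < e /\ forall y, d x y < e -> (U y <-> U x).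
  move=> x; case: (pselect (U x)) => Ux.
  - have [e e0 sub] := (Ho U).1 Uo x Ux.
    by exists e; split => // y /sub Uy.
  - have : open (~` U) by rewrite openC.
    move=> /(Ho _).1 /(_ x Ux) [e e0 sub].
    by exists e; split => // y /sub Uy.
have [E HE] := choice loc.
have := cantor_space_compact; rewrite compact_cover.
move=> /(_ cantor_space setT (fun p => [set y | d p y < E p / 2])).
case.
- by move=> i _; apply: ball_open.
- move=> x _; exists x => //=; have [_ ->] := dE x x => //.
  by have [+ _] := HE x; lra.
move=> D' _ cov.
have [eps eps0 Heps] := @minpos R _ D' (fun p => E p / 2) (fun p => ltac:(have [+ _] := HE p; lra)).
exists eps => // x y dxy.
have [p /= pD pr] := cov x I.
have := Heps p pD => /= le.
have [Ep HEp] := HE p.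
have dpy : d p y < E p by have := dT p x y; lra.
have dpx : d p x < E p by lra.
by rewrite (HEp _ dpx) (HEp _ dpy).
Qed.

Lemma iso_iter (R : realType) (d : cantor_space -> cantor_space -> R) h :
  isometry_of d h -> forall n x y, d (iter n h x) (iter n h y) = d x y.
Proof. by move=> Hh; elim=> [//|n IH] x y /=; rewrite Hh IH. Qed.

Lemma approx (R : realType) (d : cantor_space -> cantor_space -> R) h :
  compatible_metric d -> isometry_of d h -> forall del, 0 < del ->
  exists l, (0 < l)%N /\ forall x, d x (iter l h x) < del.
Proof.
move=> Hd Hh del del0.
have Hd' := Hd; case: Hd' => [[d0 dE dC dT] Ho].
have r0 : 0 < del / 4 by lra.
have [D' HD] := net Hd _ r0.
have ex : forall x, exists q : D', d (val q) x < del / 4.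
  by move=> x; have [p pD pr] := HD x; exists [` pD]%fset.
have [c Hc] := choice ex.
pose G (i : 'I_#|{ffun D' -> D'}|.+1) : {ffun D' -> D'} :=
  [ffun q : D' => c (iter i h (val q))].
have key : forall m n, (m < n)%N ->
    (forall q : D', c (iter m h (val q)) = c (iter n h (val q))) ->
    exists l, (0 < l)%N /\ forall x, d x (iter l h x) < del.
  move=> m n mn Hq; exists (n - m)%N; split; first by rewrite subn_gt0.
  have Hp : forall q : D', d (val q) (iter (n - m) h (val q)) < del / 2.
    move=> q; rewrite -(iso_iter Hh m) -iterD subnKC; last exact: ltnW.
    have := Hc (iter m h (val q)); have := Hc (iter n h (val q)).
    rewrite -Hq; have := dT (iter m h (val q)) (val (c (iter m h (val q)))) (iter n h (val q)).
    have := dC (iter m h (val q)) (val (c (iter m h (val q)))); lra.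
  move=> x; have := Hc x; set q := c x => dqx.
  have := Hp q; have := iso_iter Hh (n - m) (val q) x.
  have := dT x (val q) (iter (n - m) h x).
  have := dT (val q) (iter (n - m) h (val q)) (iter (n - m) h x).
  have := dC x (val q); lra.
case: (pselect (exists i j, i <> j /\ G i = G j)) => [[i [j [ij Gij]]]|H].
  have Hq : forall q : D', c (iter i h (val q)) = c (iter j h (val q)).
    by move=> q; move: Gij => /ffunP/(_ q); rewrite !ffunE.
  case: (ltngtP i j) => [lt|lt|/val_inj //].
  - exact: key lt Hq.
  - by apply: key lt _ => q; rewrite Hq.
have inj : injective G.
  move=> i j Gij; apply: contrapT => neq; apply: H; by exists i, j.
by have := @leq_card _ _ G inj; rewrite card_ord ltnn.
Qed.

Lemma surj (R : realType) (d : cantor_space -> cantor_space -> R) h :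
  compatible_metric d -> isometry_of d h -> forall y, exists x, h x = y.
Proof.
move=> Hd Hh y.
have Hd' := Hd; case: Hd' => [[d0 dE dC dT] Ho].
have hc : continuous h.
  apply/continuousP => A Ao; apply/Ho => x Ax.
  have [e e0 sub] := (Ho A).1 Ao (h x) Ax.
  by exists e => // z dxz; apply: sub; rewrite /= Hh.
have cpt : compact (h @` setT).
  by apply: continuous_compact; [exact: continuous_subspaceT | exact: cantor_space_compact].
have cl : closed (h @` setT) := compact_closed cantor_space_hausdorff cpt.
apply: contrapT => ny.
have yn : (~` (h @` setT)) y by move=> [x _ hx]; apply: ny; exists x.
have op : open (~` (h @` setT)) by rewrite openC.
have [e e0 sub] := (Ho _).1 op y yn.
have [[|l] [l0 Hl]] := approx Hd Hh _ e0; first by [].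
have := sub _ (Hl y); apply; by exists (iter l h y).
Qed.

Unset Implicit Arguments.
Local Close Scope ring_scope.

Theorem proposition6p2 (R : realType) (d : cantor_space -> cantor_space -> R)
    (h : cantor_space -> cantor_space) :
  compatible_metric d -> isometry_of d h ->
  forall U : set cantor_space, clopen U ->
  exists l : nat, (0 < l)%N /\ (iter l h) @` U = U.
Proof.
move=> Hd Hh U Uc.
have [eps e0 He] := leb Hd Uc.
have [l [l0 Hl]] := approx Hd Hh _ e0.
have surjl : forall n y, exists x, iter n h x = y.
  elim=> [|n IH] y; first by exists y.
  have [z <-] := surj Hd Hh y; have [x <-] := IH z; by exists x.
exists l; split => //; apply/seteqP; split.
- by move=> _ [x Ux <-]; apply/(He x _ (Hl x)).1.
- move=> y Uy; have [x xy] := surjl l y; exists x => //.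
  by apply/(He _ _ (Hl x)).2; rewrite xy.
Qed.
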